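(* Let $2\le n_0\le n_1$ be integers. Let $k=\frac{\log n_1}{\log n_0}$ and let $x_0$ be the unique root of the equation $x-1-x^{\frac{k-1}{k}}=0$ in the interval $[1,\infty)$. Then $$ch(K_{n_0,n_1})\le \left\lceil \frac{\log n_1}{\log x_0}\right\rceil+1.$$
   Context: All logarithms are to base 2. For a graph $G=(V,E)$, the choice number $ch(G)$ is the minimum integer $k$ such that for every assignment of a list $S(v)$ of at least $k$ colors to each vertex $v\in V$, there is a proper vertex coloring of $G$ assigning to each vertex $v$ a color from $S(v)$. $K_{n_0,n_1}$ denotes the complete bipartite graph with parts of sizes $n_0$ and $n_1$. *)

(* Defs.v *)
From HB Require Import structures.
From mathcomp Require Import all_boot all_order all_algebra.
From mathcomp Require Import boolp reals exp.
Set Implicit Arguments. Unset Strict Implicit. Unset Printing Implicit Defensive.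
Import Order.TTheory GRing.Theory Num.Theory.

(* A (simple) graph is a symmetric irreflexive relation e on a finType T. *)
Definition choosable (T : finType) (e : rel T) (k : nat) : Prop :=
  forall S : T -> seq nat,
    (forall v, k <= size (undup (S v)))%N ->
    exists c : T -> nat,
      (forall v, c v \in S v) /\ (forall u v, e u v -> c u != c v).

(* choice number: least k such that G is k-choosable (0 if none, which
   never happens for a finite graph). *)
Definition choice_number (T : finType) (e : rel T) : nat :=
  match pselect (exists k, `[< choosable e k >]) with
  | left H => ex_minn H
  | right _ => 0%N
  end.

Definition Kbip_rel (n0 n1 : nat) : rel ('I_n0 + 'I_n1)%type :=
  fun u v => match u, v with
             | inl _, inr _ | inr _, inl _ => true
             | _, _ => false
             end.

Definition log2 {R : realType} (x : R) : R := (ln x / ln 2)%R.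

(* Main.v *)
Require Import Defs.
From HB Require Import structures.
From mathcomp Require Import all_boot all_order all_algebra.
From mathcomp Require Import boolp reals exp.
From mathcomp Require Import ring lra.
From mathcomp Require sequences.
Local Notation expR := (@sequences.expR _).
Import Order.TTheory GRing.Theory Num.Theory.
Local Open Scope ring_scope.

Section Prob.
Variable R : realType.
Variable m : nat.
Variable p : R.
Definition wt (f : {ffun 'I_m -> bool}) : R :=
  \prod_i (if f i then p else 1 - p).

Lemma sum_prod (G : 'I_m -> bool -> R) :
  \sum_(f : {ffun 'I_m -> bool}) \prod_i G i (f i) = \prod_i (G i true + G i false).
Proof.
rewrite -bigA_distr_bigA; apply: eq_bigr => i _; by rewrite big_bool.
Qed.

Lemma wt_ge0 f : 0 <= p <= 1 -> 0 <= wt f.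
Proof.
move=> /andP[p0 p1]; apply: prodr_ge0 => i _; case: (f i) => //; by rewrite subr_ge0.
Qed.

Lemma sum_wt : \sum_f wt f = 1.
Proof.
rewrite /wt (sum_prod (fun i c => if c then p else 1 - p)); apply: big1 => i _; by rewrite subrKC.
Qed.

Lemma event_prob (A : {set 'I_m}) (b : bool) :
  \sum_f wt f * ([forall i in A, f i == b])%:R = (if b then p else 1 - p) ^+ #|A|.
Proof.
pose G i c : R := (if c then p else 1 - p) * (if i \in A then (c == b)%:R else 1).
transitivity (\sum_(f : {ffun 'I_m -> bool}) \prod_i G i (f i)).
  apply: eq_bigr => f _; rewrite /G big_split /=; congr (_ * _).
  case: forallP => [H|H].
    by rewrite big1 // => i _; case: ifP => // iA; have := H i; rewrite iA /= => ->.
  have [i /negP] : exists i, ~~ ((i \in A) ==> (f i == b)).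
    apply/existsP; rewrite -negb_forall; by apply/negP => /forallP.
  case iA: (i \in A) => //= /negP fb.
  by rewrite (bigD1 i) //= iA (negbTE fb) mul0r.
rewrite (sum_prod G) (bigID (fun i => i \in A)) /=.
rewrite [X in _ * X]big1; last first.
  move=> i /negbTE iA; by rewrite /G iA !mulr1 subrKC.
rewrite mulr1 -prodr_const; apply: eq_bigr => i iA.
by rewrite /G iA; case: (b) => /=; rewrite !mulr1 !mulr0 ?addr0 ?add0r.
Qed.
End Prob.
Arguments wt {R m}. Arguments sum_wt {R m}. Arguments event_prob {R m}. Arguments wt_ge0 {R m}.


Lemma mem_le_sumn (s : seq nat) c : c \in s -> (c <= sumn s)%N.
Proof.
elim: s => //= a s IH; rewrite in_cons => /orP[/eqP->|/IH]; first exact: leq_addr.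
move=> h; exact: (leq_trans h (leq_addl _ _)).
Qed.

Lemma choosable_of (R : realType) (n0 n1 t : nat) (p : R) :
  0 < p < 1 -> (2 <= n1)%N ->
  n0%:R * (1 - p) ^+ t + n1%:R * p ^+ t <= 1 -> choosable (@Kbip_rel n0 n1) t.
Proof.
move=> /andP[p0 p1] n1ge Hineq S HS.
pose T := ('I_n0 + 'I_n1)%type.
pose m := (\sum_(v : T) sumn (S v)).+1.
have Hm v c : c \in S v -> (c < m)%N.
  move=> /mem_le_sumn h; rewrite ltnS (leq_trans h) //.
  by rewrite (bigD1 v) //= leq_addr.
pose A (v : T) := [set i : 'I_m | val i \in S v].
have cardA v : (t <= #|A v|)%N.
  apply: (leq_trans (HS v)).
  have -> : size (undup (S v)) = size (pmap insub (undup (S v)) : seq 'I_m).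
    rewrite size_pmap_sub; apply/esym/eqP; rewrite -all_count; apply/allP => c.
    by rewrite mem_undup => /Hm.
  rewrite -(card_uniqP (pmap_sub_uniq _ (undup_uniq _))); apply: subset_leq_card.
  by apply/subsetP => i; rewrite mem_pmap_sub mem_undup inE.
pose side (v : T) := if v is inl _ then true else false.
pose bad (f : {ffun 'I_m -> bool}) v := [forall i in A v, f i == ~~ side v].
have [f Hf] : exists f, forall v, ~~ bad f v.
  apply/not_existsP => H; exfalso.
  have H1 f : 1 <= \sum_v (bad f v)%:R :> R.
    have [v /negP/negbNE bv] := (existsNP _).2 (H f).
    by rewrite (bigD1 v) //= bv lerDl sumr_ge0.
  have p01 : 0 <= p <= 1 by rewrite !ltW.
  pose E := \sum_f wt p f * \sum_v (bad f v)%:R.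
  have Eup : E <= 1.
    rewrite /E (eq_bigr (fun f => \sum_v wt p f * (bad f v)%:R)); last first.
      by move=> f _; rewrite mulr_sumr.
    rewrite exchange_big /= big_sumType /=.
    rewrite (eq_bigr (fun i => (1 - p) ^+ #|A (inl i)|)); last first.
      by move=> i _; rewrite event_prob.
    rewrite [X in _ + X](eq_bigr (fun i => p ^+ #|A (inr i)|)); last first.
      by move=> i _; rewrite event_prob.
    apply: le_trans Hineq; apply: lerD.
      have -> : n0%:R * (1 - p) ^+ t = \sum_(i < n0) (1 - p) ^+ t.
        by rewrite sumr_const card_ord mulr_natl.
      apply: ler_sum => i _.
      apply: ler_wiXn2l => //; by rewrite ?subr_ge0 ?lerBlDr ?lerDl ltW.
    have -> : n1%:R * p ^+ t = \sum_(i < n1) p ^+ t.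
      by rewrite sumr_const card_ord mulr_natl.
    apply: ler_sum => i _.
    by apply: ler_wiXn2l => //; rewrite ltW.
  pose fT : {ffun 'I_m -> bool} := [ffun=> true].
  have Elo : 1 < E.
    have -> : E = \sum_(f : {ffun 'I_m -> bool}) wt p f + \sum_f wt p f * (\sum_v (bad f v)%:R - 1).
      by rewrite -big_split /=; apply: eq_bigr => f _; rewrite mulrBr mulr1 addrC subrK.
    rewrite sum_wt ltrDl (bigD1 fT) //=; apply: ltr_wpDr.
      apply: sumr_ge0 => f _; apply: mulr_ge0; first exact: wt_ge0.
      by rewrite subr_ge0.
    apply: mulr_gt0.
      by rewrite /wt; apply: prodr_gt0 => i _; rewrite ffunE.
    rewrite subr_gt0 big_sumType /= addrC; apply: ltr_wpDr; first exact: sumr_ge0.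
    rewrite (eq_bigr (fun _ => 1)); last first.
      move=> i _; suff -> : bad fT (inr i) = true by []. by apply/forallP => j; rewrite ffunE /= implybT.
    by rewrite sumr_const card_ord ltr1n.
  by move: (lt_le_trans Elo Eup); rewrite ltxx.
have Hpick v : exists i, (i \in A v) && (f i == side v).
  have := Hf v; rewrite negb_forall => /existsP[i]; rewrite negb_imply => /andP[iA fi].
  by exists i; rewrite iA /=; move: fi; case: (f i); case: (side v).
pose c v := if [pick i | (i \in A v) && (f i == side v)] is Some i then val i else 0%N.
exists c; split.
  move=> v; rewrite /c; case: pickP => [i /andP[]|]; first by rewrite inE.
  by have [i Hi] := Hpick v => /(_ i); rewrite Hi.
have Hc v : exists2 i, c v = val i & f i == side v.
  rewrite /c; case: pickP => [i /andP[_ fi]|]; first by exists i.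
  by have [l Hl] := Hpick v => /(_ l); rewrite Hl.
move=> u v; case: u => [u|u]; case: v => [v|v] //= _.
  have [i -> fi] := Hc (inl u); have [j -> fj] := Hc (inr v).
  by apply/eqP => /val_inj eij; move: fi fj; rewrite eij => /eqP ->.
have [i -> fi] := Hc (inr u); have [j -> fj] := Hc (inl v).
by apply/eqP => /val_inj eij; move: fi fj; rewrite eij => /eqP ->.
Qed.

Lemma cn_le (T : finType) (e : rel T) t : choosable e t -> (choice_number e <= t)%N.
Proof.
move=> Ht; rewrite /choice_number; case: pselect => [H|H] //.
case: ex_minnP => n _ min; apply: min; exact/asboolP.
Qed.

Theorem theorem2 (R : realType) (n0 n1 : nat) (x0 : R) :
  (2 <= n0)%N -> (n0 <= n1)%N ->
  let k : R := log2 (n1%:R : R) / log2 (n0%:R : R) in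
  1 <= x0 -> x0 - 1 - x0 `^ ((k - 1) / k) = 0 ->
  ((choice_number (@Kbip_rel n0 n1))%:Z <=
     Num.ceil (log2 (n1%:R : R) / log2 x0) + 1)%R.
Proof.
move=> h0 h01 k hx0 heq.
have h1 : (2 <= n1)%N by apply: leq_trans h01.
have ln2 : 0 < ln (2 : R) by apply: ln_gt0; rewrite ltr1n.
have lr a b : log2 a / log2 b = ln a / ln b :> R.
  by rewrite /log2 invf_div mulrA divfK // gt_eqF.
have x1 : 1 < x0.
  rewrite lt_neqAle hx0 andbT; apply/negP => /eqP ex.
  by move: heq; rewrite -ex powR1 subrr sub0r => /eqP; rewrite oppr_eq0 oner_eq0.
have x0p : 0 < x0 by apply: lt_trans x1.
set l := ln x0.
have lp : 0 < l by apply: ln_gt0.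
set a := ln (n1%:R : R). set b := ln (n0%:R : R).
have ap : 0 < a by apply: ln_gt0; rewrite ltr1n.
have bp : 0 < b by apply: ln_gt0; rewrite ltr1n.
have kE : k = a / b by rewrite /k lr.
have kp : 0 < k by rewrite kE divr_gt0.
rewrite lr -/a -/l.
set L := a / l.
have Lp : 0 < L by rewrite divr_gt0.
have c0 : 0 <= Num.ceil L by rewrite ceil_ge0 (lt_trans _ Lp) // ltrN10.
pose t := (`|Num.ceil L|%N).+1.
have tZ : t%:Z = Num.ceil L + 1 by rewrite /t -addn1 PoszD gez0_abs.
have tR : L + 1 <= t%:R :> R.
  have -> : t%:R = (Num.ceil L + 1)%:~R :> R by rewrite -tZ.
  by rewrite intrD lerD2r ceil_ge.
rewrite -tZ lez_nat; apply: cn_le.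
pose p := x0^-1.
have pE : p = expR (- l) by rewrite expRN /l lnK // posrE.
have qE : 1 - p = expR (- l / k).
  have : x0 - 1 = expR ((k - 1) / k * l).
    by move/eqP: heq; rewrite subr_eq0 => /eqP ->; rewrite /powR gt_eqF.
  have -> : 1 - p = (x0 - 1) * p by rewrite mulrBl /p mulfV ?gt_eqF // mul1r.
  move=> ->; rewrite pE -expRD; congr expR; field; by rewrite gt_eqF.
apply: (@choosable_of R _ _ _ p).
- by rewrite /p invr_gt0 x0p /= invf_lt1.
- exact: h1.
have n0E : n0%:R = expR (a / k) :> R.
  by rewrite kE /a invf_div mulrA mulrAC mulfV ?gt_eqF // mul1r lnK // posrE ltr0n (leq_trans _ h0).
have n1E : n1%:R = expR a :> R by rewrite lnK // posrE ltr0n (leq_trans _ h1).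
have key : a - t%:R * l <= - l.
  rewrite lerBlDr addrC -lerBlDr opprK.
  have : (L + 1) * l <= t%:R * l by apply: ler_wpM2r => //; exact: ltW.
  by rewrite mulrDl /L divfK ?gt_eqF // mul1r.
rewrite qE pE n0E n1E -!expRM_natl -!expRD.
have E1 : expR (- l / k) + expR (- l) = 1 by rewrite -qE -pE subrK.
rewrite -[X in _ <= X]E1.
apply: lerD.
  rewrite ler_expR.
  have -> : a / k + t%:R * (- l / k) = (a - t%:R * l) / k by rewrite !mulrA mulrN -mulNr -mulrDl.
  apply: ler_wpM2r => //; by rewrite invr_ge0 ltW.
by rewrite ler_expR mulrN.
Qed.
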